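(* For every integer $n\ge 3$, the prism graph $P_2\,\square\,C_n$ (of order $2n$) is not orientable $\mathbb{Z}_{2n}$-distance magic.
   Context: $P_2$ is the path on 2 vertices and $C_n$ the cycle on $n$ vertices. The Cartesian product $G\,\square\,H$ has vertex set $V(G)\times V(H)$, with $(g,h)$ adjacent to $(g',h')$ iff either $g=g'$ and $h$ is adjacent to $h'$ in $H$, or $h=h'$ and $g$ is adjacent to $g'$ in $G$. For an oriented graph $\vec G$ and a vertex $x$, $N^+(x)$ is the set of vertices $y$ with an arc from $x$ to $y$, and $N^-(x)$ is the set of vertices $y$ with an arc from $y$ to $x$. For an Abelian group $\Gamma$ of order $n$, a directed $\Gamma$-distance magic labeling of an oriented graph $\vec G$ of order $n$ is a bijection $\vec l:V\to\Gamma$ such that there is $\mu\in\Gamma$ with $\sum_{y\in N^+(x)}\vec l(y)-\sum_{y\in N^-(x)}\vec l(y)=\mu$ for every vertex $x$. A simple graph $G$ of order $n$ is orientable $\Gamma$-distance magic if some orientation of its edges admits a directed $\Gamma$-distance magic labeling. $\mathbb{Z}_n$ is the cyclic group of integers modulo $n$. *)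

(* Defs.v *)
From HB Require Import structures.
From mathcomp Require Import all_boot all_order all_algebra.
Set Implicit Arguments. Unset Strict Implicit. Unset Printing Implicit Defensive.
Import GRing.Theory.

Definition simple_graph (V : finType) (e : rel V) : Prop :=
  irreflexive e /\ symmetric e.

Definition P2_rel : rel 'I_2 := fun i j => i != j.

Definition cycle_rel (n : nat) : rel 'I_n :=
  fun i j => (j == (i.+1 %% n)%N :> nat) || (i == (j.+1 %% n)%N :> nat).

Definition cart_rel (V W : finType) (eG : rel V) (eH : rel W) : rel (V * W) :=
  fun x y => ((x.1 == y.1) && eH x.2 y.2) || ((x.2 == y.2) && eG x.1 y.1).

Definition prism_rel (n : nat) : rel ('I_2 * 'I_n) := cart_rel P2_rel (@cycle_rel n).

Definition is_orientation (V : finType) (e o : rel V) : Prop :=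
  (forall x y, o x y -> e x y) /\
  (forall x y, e x y -> (o x y (+) o y x)).

Definition out_nbhd (V : finType) (o : rel V) (x : V) : {set V} := [set y | o x y].
Definition in_nbhd (V : finType) (o : rel V) (x : V) : {set V} := [set y | o y x].

Local Open Scope ring_scope.
Definition directed_dm_labeling (V : finType) (G : zmodType) (o : rel V)
    (l : V -> G) : Prop :=
  bijective l /\
  exists mu : G, forall x : V,
    \sum_(y in out_nbhd o x) l y - \sum_(y in in_nbhd o x) l y = mu.

Definition orientable_dm (V : finType) (G : finZmodType) (e : rel V) : Prop :=
  #|V| = #|G| /\
  exists o : rel V, is_orientation e o /\
    exists l : V -> G, directed_dm_labeling o l.

Arguments cycle_rel n : clear implicits.
Arguments prism_rel n : clear implicits.

(* Main.v *)
Require Import Defs.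
From HB Require Import structures.
From mathcomp Require Import all_boot all_order all_algebra zify.

Lemma shift1 (n : nat) (F : nat -> nat) : (forall k, F (k + n) = F k) ->
  \sum_(k < n) F (k.+1) = \sum_(k < n) F k.
Proof.
move=> hF; have h1 : \sum_(k < n.+1) F k = F 0 + \sum_(k < n) F k.+1 by rewrite big_ord_recl.
have h2 : \sum_(k < n.+1) F k = \sum_(k < n) F k + F n by rewrite big_ord_recr.
rewrite h1 in h2.
have : F n = F 0 by rewrite -(hF 0) add0n.
move=> e; rewrite e in h2.
rewrite addnC in h2; by move/addIn: h2.
Qed.

Lemma block6 (F : nat -> nat) : (forall k, F (k + 6) = F k) ->
  forall q, \sum_(k < 6 * q) F k = q * \sum_(k < 6) F k.
Proof.
move=> hF; elim=> [|q IH]; first by rewrite muln0 big_ord0.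
have e : 6 * q.+1 = (6 * q).+1.+1.+1.+1.+1.+1 by lia.
rewrite e !big_ord_recr /= IH.
have per : forall j i, F (i + 6 * j) = F i.
  elim=> [|j IHj] i; first by rewrite muln0 addn0.
  by rewrite mulnS addnA IHj hF.
rewrite -{1}(add0n (6*q)) per -{1}(add1n (6*q)) per -{1}(add2n (6*q)) per.
rewrite -{1}(add3n (6*q)) per -{1}(add4n (6*q)) per.
have -> : (6 * q).+4.+1 = 5 + 6 * q by lia.
rewrite per mulSn.
rewrite [\sum_(k < 6) F k]big_ord_recr /= !big_ord_recr big_ord0 /=.
lia.
Qed.

Lemma comb (n : nat) (U W : nat -> bool) (c : bool) : (3 <= n)%N ->
  (forall k, U (k + n) = U k) -> (forall k, W (k + n) = W k) ->
  (forall k, U (k.+2) (+) U k (+) W (k.+1) = c) ->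
  (forall k, W (k.+2) (+) W k (+) U (k.+1) = c) ->
  \sum_(k < n) (U k + W k) <> n.
Proof.
move=> hn pU pW eU eW.
have h1 : forall k, U k.+4 (+) U k.+2 (+) U k = c.
  move=> k; move: (eU k) (eU k.+2) (eW k.+1); clear eU eW.
  by case: (U k) (U k.+2) (U k.+4) (W k.+1) (W k.+3) c => [] [] [] [] [] [].
have h2' : forall k, W k.+1 = U k.+4.
  move=> k; move: (eU k) (h1 k); clear eU eW h1.
  by case: (U k) (U k.+2) (U k.+4) (W k.+1) c => [] [] [] [] [].
have h2 : forall k, W k = U (k + 3).
  move=> k; rewrite -pW -(pU (k+3)).
  have -> : k + n = (k + n).-1.+1 by lia.
  rewrite h2'; congr U; lia.
have h3 : forall k, U (k + 6) = U k.
  move=> k; move: (h1 k) (h1 k.+2); rewrite (_ : k + 6 = k.+2.+4); last by lia. clear eU eW h1 h2' h2.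
  by case: (U k) (U k.+2) (U k.+4) (U k.+2.+4) c => [] [] [] [] [].
have sW : \sum_(k < n) (W k : nat) = \sum_(k < n) (U k : nat).
  rewrite (eq_bigr (fun k : 'I_n => (U (k : nat).+1.+1.+1 : nat))); last first.
    by move=> i _; rewrite h2 addn3.
  have q2 : forall k, (U (k + n).+2 : nat) = U k.+2 by move=> k; rewrite -addSn -addSn pU.
  have q1 : forall k, (U (k + n).+1 : nat) = U k.+1 by move=> k; rewrite -addSn pU.
  have q0 : forall k, (U (k + n) : nat) = U k by move=> k; rewrite pU.
  have e1 := @shift1 n (fun k => (U k.+2 : nat)) q2.
  have e2 := @shift1 n (fun k => (U k.+1 : nat)) q1.
  have e3 := @shift1 n (fun k => (U k : nat)) q0.
  simpl in e1, e2, e3.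
  by rewrite e1 e2 e3.
rewrite big_split /= sW => hK.
set K := \sum_(k < n) (U k : nat) in hK.
have pUm : forall b k, U (k + n * b) = U k.
  elim=> [|b IH] k; first by rewrite muln0 addn0.
  by rewrite mulnS addnA IH pU.
have pU6 : forall a k, U (k + 6 * a) = U k.
  elim=> [|a IH] k; first by rewrite muln0 addn0.
  by rewrite mulnS addnA IH h3.
case: (boolP (3 %| n)) => h3n.
- have [q hq] : exists q, n = 6 * q.
    exists (n %/ 6). lia.
  have hb := block6 (fun k => (U k : nat)) (fun k => congr1 nat_of_bool (h3 k)).
  move: hK; rewrite /K hq hb => hK.
  have q0 : 0 < q by lia.
  have hS : \sum_(k < 6) (U k : nat) = 3 by nia.
  move: hS; rewrite !big_ord_recr big_ord0 /=.
  move: (h1 0) (h1 1).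
  clear.
  by case: (U 0) (U 1) (U 2) (U 3) (U 4) (U 5) c => [] [] [] [] [] [] [].
- have [b hb] : exists b, 3 %| 1 + K * b.
    case: (ltngtP (K %% 3) 1) => h.
    + exfalso; move/negP: h3n; apply; lia.
    + exists 1; lia.
    + exists 2; lia.
  have p2 : forall k, U (k + 2) = U k.
    move=> k; rewrite -(pUm b); have [a ha] : exists a, 1 + K * b = 3 * a.
      by exists ((1 + K * b) %/ 3); lia.
    have -> : k + 2 + n * b = k + 6 * a by nia.
    by rewrite pU6.
  have uc : forall k, U k = c.
    move=> k; move: (h1 k); rewrite -(addn4 k) -(addn2 k) p2.
    have -> : k + 4 = k + 2 + 2 by lia.
    by rewrite !p2; clear; case: (U k) c => [] [].
  move: hK; rewrite /K (eq_bigr (fun _ => (c : nat))); last by move=> i _; rewrite uc.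
  rewrite sum_nat_const card_ord => hc; clear -hc hn; case: c hc => /=; lia.
Qed.

Lemma odd_addZ (m : nat) (x y : 'I_m.+2) : ~~ odd m -> odd (x + y)%R = odd x (+) odd y.
Proof. by move=> hm /=; rewrite odd_mod ?oddD //= negbK (negbTE hm). Qed.

Lemma odd_oppZ (m : nat) (x : 'I_m.+2) : ~~ odd m -> odd (- x)%R = odd x.
Proof.
move=> hm /=; rewrite odd_mod ?oddB ?(ltnW (ltn_ord x)) //=; last by rewrite negbK (negbTE hm).
by rewrite negbK (negbTE hm).
Qed.

Lemma odd_sumZ (m : nat) (I : finType) (P : pred I) (F : I -> 'I_m.+2) : ~~ odd m ->
  odd (\sum_(i | P i) F i)%R = \big[addb/false]_(i | P i) odd (F i).
Proof.
move=> hm; apply: (big_rec2 (fun (a : 'I_m.+2) b => odd a = b)) => //.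
by move=> i a b _ <-; rewrite odd_addZ.
Qed.

Lemma xor_nb (V : finType) (e o : rel V) (g : V -> bool) x :
  symmetric e -> is_orientation e o ->
  \big[addb/false]_(y in out_nbhd o x) g y (+) \big[addb/false]_(y in in_nbhd o x) g y
  = \big[addb/false]_(y | e x y) g y.
Proof.
move=> se [o1 o2]; rewrite big_mkcond [X in _ (+) X]big_mkcond [RHS]big_mkcond.
rewrite -big_split /=; apply: eq_bigr => y _; rewrite !inE.
have /implyP := o2 x y; have /implyP := o1 x y; have /implyP := o1 y x; rewrite (se y x).
by case: (o x y) (o y x) (e x y) (g y) => [] [] [] [].
Qed.

Lemma xor3 (T : finType) (P : pred T) (f : T -> bool) y1 y2 y3 :
  y1 != y2 -> y1 != y3 -> y2 != y3 ->
  (forall y, P y = [|| y == y1, y == y2 | y == y3]) ->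
  \big[addb/false]_(y | P y) f y = f y1 (+) f y2 (+) f y3.
Proof.
move=> n12 n13 n23 hP.
rewrite (bigD1 y1); last by rewrite hP eqxx.
rewrite (bigD1 y2) /=; last by rewrite hP eqxx orbT eq_sym n12.
rewrite (bigD1 y3) /=; last by rewrite hP eqxx !orbT /= (eq_sym y3) n13 (eq_sym y3) n23.
rewrite big_pred0; last first.
  move=> y /=; rewrite hP.
  by case: (y == y1); case: (y == y2); case: (y == y3); rewrite ?andbF.
by rewrite addbF addbA.
Qed.

Lemma sum_odd_ord m : \sum_(i < m) (odd i : nat) = m./2.
Proof.
elim: m => [|m IH]; first by rewrite big_ord0.
by rewrite big_ord_recr /= IH uphalf_half addnC.
Qed.

Lemma prism_sym n : symmetric (prism_rel n).
Proof.
move=> [a i] [b j]; rewrite /prism_rel /cart_rel /P2_rel /cycle_rel /=.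
by rewrite (eq_sym a) (eq_sym i) (orbC (val j == _)).
Qed.

Lemma prism_nb n (a a' : 'I_2) (i : 'I_n) :
  (forall b : 'I_2, (a != b) = (b == a')) ->
  forall y, prism_rel n (a, i) y = [|| y == (a, ordS i), y == (a, ord_pred i) | y == (a', i)].
Proof.
move=> ha [b j]; rewrite /prism_rel /cart_rel /P2_rel /cycle_rel /= !xpair_eqE ha.
have e1 : (val j == (val i).+1 %% n) = (j == ordS i) by [].
have e2 : (val i == (val j).+1 %% n) = (j == ord_pred i).
  rewrite -[LHS]/(i == ordS j).
  by apply/eqP/eqP => [->|->]; [rewrite ordSK | rewrite ord_predK].
rewrite e1 e2 (eq_sym i j) (eq_sym a b).
by case: (b == a); case: (b == a'); case: (j == ordS i); case: (j == ord_pred i); case: (j == i).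
Qed.

Theorem theorem7 (n : nat) (hn : (3 <= n)%N) :
  ~ orientable_dm 'Z_(2 * n) (prism_rel n).
Proof.
case=> _ [o [Ho [l [[l' lK lK'] [mu Hmu]]]]].
have n0 : 0 < n by lia.
have hm : ~~ odd (Zp_trunc (2 * n)).
  by rewrite /Zp_trunc -subn2 oddB ?oddM //; lia.
pose f := fun y => odd (l y).
pose c := odd mu.
have key : forall x, \big[addb/false]_(y | prism_rel n x y) f y = c.
  move=> x; rewrite -(@xor_nb _ _ _ f x (@prism_sym n) Ho) /c -(Hmu x).
  by rewrite odd_addZ // odd_oppZ // !odd_sumZ.
pose O k := Ordinal (ltn_pmod k n0).
pose a0 : 'I_2 := ord0.
pose a1 : 'I_2 := ord_max.
pose U k := f (a0, O k).
pose W k := f (a1, O k).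
have OS : forall k, ordS (O k) = O k.+1.
  by move=> k; apply: val_inj => /=; rewrite -addn1 modnDml addn1.
have OP : forall k, ord_pred (O k.+1) = O k by move=> k; rewrite -OS ordSK.
have On : forall k, O (k + n) = O k by move=> k; apply: val_inj => /=; rewrite modnDr.
have Od : forall k, O k.+2 != O k.
  move=> k; apply/eqP => /(congr1 val) /= /eqP.
  rewrite -addn2 -{2}(addn0 k) eqn_modDl mod0n modn_small //; lia.
have h01 : forall b : 'I_2, (a0 != b) = (b == a1).
  by case=> [[|[|]]] //.
have h10 : forall b : 'I_2, (a1 != b) = (b == a0).
  by case=> [[|[|]]] //.
have eU : forall k, U k.+2 (+) U k (+) W k.+1 = c.
  move=> k; rewrite -(key (a0, O k.+1)) (@xor3 _ (prism_rel n (a0, O k.+1)) f _ _ _ _ _ _ (@prism_nb n a0 a1 (O k.+1) h01)).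
  - by rewrite OS OP.
  - by rewrite xpair_eqE eqxx /= OS OP Od.
  - by rewrite xpair_eqE.
  - by rewrite xpair_eqE.
have eW : forall k, W k.+2 (+) W k (+) U k.+1 = c.
  move=> k; rewrite -(key (a1, O k.+1)) (@xor3 _ (prism_rel n (a1, O k.+1)) f _ _ _ _ _ _ (@prism_nb n a1 a0 (O k.+1) h10)).
  - by rewrite OS OP.
  - by rewrite xpair_eqE eqxx /= OS OP Od.
  - by rewrite xpair_eqE.
  - by rewrite xpair_eqE.
apply: (@comb n U W c hn).
- by move=> k; rewrite /U On.
- by move=> k; rewrite /W On.
- exact: eU.
- exact: eW.
have cZ : \sum_(z : 'Z_(2 * n)) (odd z : nat) = n.
  by rewrite sum_odd_ord Zp_cast ?mul2n ?doubleK //; lia.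
transitivity (\sum_(y : 'I_2 * 'I_n) (f y : nat)); last first.
  rewrite -[RHS]cZ (reindex l) //; exact: onW_bij (Bijective lK lK').
rewrite (eq_bigr (fun p : 'I_2 * 'I_n => (f (p.1, p.2) : nat))); last by case.
rewrite -(pair_bigA _ (fun a j => (f (a, j) : nat))) big_ord_recl big_ord1 -big_split /=.
apply: eq_bigr => k _; rewrite /U /W.
have -> : O k = k by apply: val_inj => /=; rewrite modn_small.
have -> : lift ord0 ord0 = a1 by apply: val_inj.
by [].
Qed.
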